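(* Let $q>1$ and let $\rho$ be a positive $2\pi$-periodic $C^2$ function with $(\ln\rho)''(t)<\sqrt{q}/(1+\sqrt{q})$ for all $t$; let $y(\theta)=\rho(\theta)(\cos\theta,\sin\theta)^T$, and let $\phi$ be a continuous function on $\mathbb{S}^1$. With the notation in the context, suppose there is a sequence of positive numbers $k_n\to\infty$ such that for every $\eta\in\mathbb{S}^1$ and every integer $N\ge0$, $$\sum_{j,l=1}^2\big(f_\eta^{j,l}\big)^N\frac{\phi(\mathcal{T}_{j,l}\eta+\delta_{l,2}\pi)\,\Psi_\eta^{j,l}}{|\det D^2\psi_\eta^{j,l}|^{1/2}}\,e^{\mathrm{i}\pi\frac{(-1)^l(1-(-1)^j)}{4}+\mathrm{i}k_n\psi_\eta^{j,l}}\longrightarrow0\quad(n\to\infty).$$ Then for every $\eta\in\mathbb{S}^1$, the set $\Lambda=\Lambda_\eta=\{(j,l)\in\{1,2\}^2:\phi(\mathcal{T}_{j,l}\eta+\delta_{l,2}\pi)\neq0\}$ satisfies $\#\Lambda\in\{0,2,3,4\}$, and moreover: if $\#\Lambda\in\{2,3\}$, then $f_\eta^{j,l}$ takes the same value for all $(j,l)\in\Lambda$; if $\#\Lambda=4$, then either $f_\eta^{j,l}$ takes the same value for all $(j,l)\in\Lambda$, or $\Lambda=\Lambda_1\cup\Lambda_2$ with $\#\Lambda_1=\#\Lambda_2=2$, $f_\eta^{j,l}$ constant on each $\Lambda_p$, and for each $p=1,2$ and every integer $N\ge0$ the sum above restricted to $(j,l)\in\Lambda_p$ tends to $0$ as 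$n\to\infty$.
   Context: Identify $\mathbb{S}^1$ with $\mathbb{R}/(2\pi\mathbb{Z})$ via $\theta\mapsto(\cos\theta,\sin\theta)^T$; $\theta_\eta$ is the angle of $\eta$, and $x^\perp=(-x_2,x_1)^T$. For $\eta\in\mathbb{S}^1$ and $\xi=(\cos\theta_\xi,\sin\theta_\xi)$: $\psi_\eta(\theta,\theta_\xi)=(\sqrt{q}\eta+\xi)\cdot y(\theta)$, $\Psi_\eta(\theta,\theta_\xi)=-(\sqrt{q}\eta-\xi)\cdot y'(\theta)^\perp$, and $D^2\psi_\eta(\theta,\theta_\xi)=\begin{bmatrix}(\sqrt{q}\eta+\xi)\cdot y''(\theta)&\xi^\perp\cdot y'(\theta)\\ \xi^\perp\cdot y'(\theta)&-\xi\cdot y(\theta)\end{bmatrix}$. For $l\in\{1,2\}$ let $\eta_l=(-1)^{l-1}\eta$, $\theta_q=\arccos(1/\sqrt q)$, $h(\theta)=\frac{\sqrt q\sin\theta}{\sqrt q\cos\theta+1}$; the equation $(\ln\rho)'(\theta)=h(\theta-\theta_{\eta_l})$ has exactly two solutions in $\mathbb{R}/(2\pi\mathbb{Z})$: $\mathcal{T}_{1,l}\eta$ with $\theta-\theta_{\eta_l}\in(\theta_q-\pi,\pi-\theta_q)$ and $\mathcal{T}_{2,l}\eta$ with $\theta-\theta_{\eta_l}\in(\pi-\theta_q,\pi+\theta_q)$ (mod $2\pi$). Set $\{\Psi_\eta^{j,l},\psi_\eta^{j,l},D^2\psi_\eta^{j,l}\}=\{\Psi_\eta,\psi_\eta,D^2\psi_\eta\}(\mathcal{T}_{j,l}\eta,\mathcal{T}_{j,l}\eta+\delta_{l,2}\pi)$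 (these determinants are nonzero) and $f_\eta^{j,l}=\rho(\mathcal{T}_{j,l}\eta)\sin(\mathcal{T}_{j,l}\eta-\theta_\eta)$; $\delta_{l,2}$ is the Kronecker delta and $\phi$ is viewed as a function of the angle. *)

(* Defs.v *)
From Stdlib Require Import Reals Lra List ClassicalEpsilon.
From Coquelicot Require Import Coquelicot.
Import ListNotations.
Open Scope R_scope.

Definition all_idx : list (nat * nat) := [(1,1); (1,2); (2,1); (2,2)]%nat.

Definition kdelta2 (l : nat) : R := if Nat.eqb l 2 then 1 else 0.

Definition theta_q (q : R) : R := acos (1 / sqrt q).

Definition hfun (q t : R) : R := sqrt q * sin t / (sqrt q * cos t + 1).

(* angle of eta_l = (-1)^(l-1) eta, where a is the angle of eta *)
Definition theta_eta_l (a : R) (l : nat) : R := a + (INR l - 1) * PI.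

Definition in_mod2pi (x lo hi : R) : Prop :=
  exists k : Z, lo < x + 2 * PI * IZR k < hi.

Definition Tspec (q : R) (rho : R -> R) (j l : nat) (a th : R) : Prop :=
  0 <= th < 2 * PI /\
  Derive (fun t => ln (rho t)) th = hfun q (th - theta_eta_l a l) /\
  (if Nat.eqb j 1
   then in_mod2pi (th - theta_eta_l a l) (theta_q q - PI) (PI - theta_q q)
   else in_mod2pi (th - theta_eta_l a l) (PI - theta_q q) (PI + theta_q q)).

Definition Tjl (q : R) (rho : R -> R) (j l : nat) (a : R) : R :=
  epsilon (inhabits 0) (Tspec q rho j l a).

Definition y1 (rho : R -> R) (t : R) : R := rho t * cos t.
Definition y2 (rho : R -> R) (t : R) : R := rho t * sin t.

Definition psi_eta (q : R) (rho : R -> R) (a th thx : R) : R :=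
  (sqrt q * cos a + cos thx) * y1 rho th + (sqrt q * sin a + sin thx) * y2 rho th.

(* Psi_eta(theta, theta_xi) = - (sqrt q eta - xi) . y'(theta)^perp,
   with x^perp = (-x2, x1) *)
Definition Psi_eta (q : R) (rho : R -> R) (a th thx : R) : R :=
  - ((sqrt q * cos a - cos thx) * (- Derive (y2 rho) th)
     + (sqrt q * sin a - sin thx) * Derive (y1 rho) th).

Definition detD2psi (q : R) (rho : R -> R) (a th thx : R) : R :=
  let A := (sqrt q * cos a + cos thx) * Derive (Derive (y1 rho)) th
         + (sqrt q * sin a + sin thx) * Derive (Derive (y2 rho)) th in
  let B := (- sin thx) * Derive (y1 rho) th + cos thx * Derive (y2 rho) th in
  let Cc := - (cos thx * y1 rho th + sin thx * y2 rho th) in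
  A * Cc - B * B.

Definition thT q rho j l a : R := Tjl q rho j l a.
Definition thX q rho j l a : R := Tjl q rho j l a + kdelta2 l * PI.

Definition f_eta (q : R) (rho : R -> R) (a : R) (p : nat * nat) : R :=
  let '(j, l) := p in rho (thT q rho j l a) * sin (thT q rho j l a - a).

Definition phi_at (q : R) (rho : R -> R) (phi : R -> C) (a : R) (p : nat * nat) : C :=
  let '(j, l) := p in phi (thX q rho j l a).

Definition cexpi (t : R) : C := (cos t, sin t).

Definition term (q : R) (rho : R -> R) (phi : R -> C) (k : R) (N : nat)
    (a : R) (p : nat * nat) : C :=
  let '(j, l) := p in
  let th := thT q rho j l a in
  let thx := thX q rho j l a in
  Cmult
    (Cmult (RtoC (f_eta q rho a p ^ N * Psi_eta q rho a th thx
                  / sqrt (Rabs (detD2psi q rho a th thx))))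
           (phi_at q rho phi a p))
    (cexpi (PI * (-1) ^ l * (1 - (-1) ^ j) / 4 + k * psi_eta q rho a th thx)).

Definition sumC (L : list (nat * nat)) (F : nat * nat -> C) : C :=
  fold_right Cplus (RtoC 0) (map F L).

Definition in_Lambda (q : R) (rho : R -> R) (phi : R -> C) (a : R) (p : nat * nat) : bool :=
  if excluded_middle_informative (phi_at q rho phi a p = RtoC 0) then false else true.

Definition Lambda (q : R) (rho : R -> R) (phi : R -> C) (a : R) : list (nat * nat) :=
  filter (in_Lambda q rho phi a) all_idx.

Definition f_const_on (q : R) (rho : R -> R) (a : R) (L : list (nat * nat)) : Prop :=
  exists c : R, forall p, In p L -> f_eta q rho a p = c.

(* Main.v *)
Require Import Defs.
From Stdlib Require Import Reals ZArith List Permutation Lra Lia Classical ClassicalEpsilon.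
From Coquelicot Require Import Coquelicot.
Import ListNotations.
Open Scope R_scope.


Definition lim0 (z : nat -> C) := is_lim_seq (fun n => Cmod (z n)) 0.

Lemma lim0_ext z w : (forall n, z n = w n) -> lim0 z -> lim0 w.
Proof. intros H Hz. unfold lim0. eapply is_lim_seq_ext; [|exact Hz]. intros n; simpl; now rewrite H. Qed.

Lemma lim0_plus z w : lim0 z -> lim0 w -> lim0 (fun n => z n + w n)%C.
Proof.
  intros Hz Hw. unfold lim0.
  apply is_lim_seq_le_le with (u := fun _ => 0) (w := fun n => Cmod (z n) + Cmod (w n)).
  - intros n; split; [apply Cmod_ge_0|apply Cmod_triangle].
  - apply is_lim_seq_const.
  - replace (Finite 0) with (Finite (0 + 0)) by (f_equal; ring).
    now apply is_lim_seq_plus'.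
Qed.

Lemma lim0_scal (c : C) z : lim0 z -> lim0 (fun n => c * z n)%C.
Proof.
  intros Hz. unfold lim0.
  eapply is_lim_seq_ext. { intros n. symmetry. apply Cmod_mult. }
  replace (Finite 0) with (Rbar_mult (Cmod c) 0) by (simpl; f_equal; ring).
  now apply is_lim_seq_scal_l.
Qed.

Lemma lim0_minus z w : lim0 z -> lim0 w -> lim0 (fun n => z n - w n)%C.
Proof.
  intros Hz Hw. apply lim0_ext with (fun n => z n + (RtoC (-1)) * w n)%C.
  { intros n. replace (RtoC (-1)) with (Copp (RtoC 1)) by (apply injective_projections; simpl; ring). ring. }
  apply lim0_plus; auto. now apply lim0_scal.
Qed.

Lemma sumC_cons p L F : sumC (p :: L) F = (F p + sumC L F)%C.
Proof. reflexivity. Qed.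

Lemma sumC_ext L F G : (forall p, In p L -> F p = G p) -> sumC L F = sumC L G.
Proof.
  induction L as [|x L IH]; intros H; [reflexivity|].
  rewrite !sumC_cons. rewrite H by (left; auto). rewrite IH; auto.
  intros p Hp; apply H; right; auto.
Qed.

Lemma sumC_lin L F G w :
  sumC L (fun p => F p - RtoC w * G p)%C = (sumC L F - RtoC w * sumC L G)%C.
Proof.
  induction L as [|x L IH].
  - unfold sumC; simpl. ring.
  - rewrite !sumC_cons, IH. ring.
Qed.

Lemma sumC_scal L G c :
  sumC L (fun p => c * G p)%C = (c * sumC L G)%C.
Proof.
  induction L as [|x L IH].
  - unfold sumC; simpl. ring.
  - rewrite !sumC_cons, IH. ring.
Qed.

Lemma sumC_zero L g : (forall p, In p L -> g p = RtoC 0) -> sumC L g = RtoC 0.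
Proof.
  induction L as [|x L IH]; intros H; [reflexivity|].
  rewrite sumC_cons, H by (left; auto). rewrite IH. ring.
  intros p Hp; apply H; right; auto.
Qed.

Lemma sumC_single L g p : NoDup L -> In p L ->
  (forall p', In p' L -> p' <> p -> g p' = RtoC 0) -> sumC L g = g p.
Proof.
  induction L as [|x L IH]; intros Hnd Hin H; [destruct Hin|].
  inversion Hnd; subst. rewrite sumC_cons.
  destruct Hin as [<-|Hin].
  - rewrite sumC_zero. ring. intros p' Hp'. apply H; [right; auto|].
    intros ->. contradiction.
  - rewrite H; [|left; auto|intros ->; contradiction].
    rewrite IH; auto. ring. intros p' Hp' Hne; apply H; auto; right; auto.
Qed.

Lemma sumC_pair L g p p' : NoDup L -> In p L -> In p' L -> p <> p' ->
  (forall p'', In p'' L -> p'' <> p -> p'' <> p' -> g p'' = RtoC 0) ->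
  sumC L g = (g p + g p')%C.
Proof.
  induction L as [|x L IH]; intros Hnd Hin Hin' Hne H; [destruct Hin|].
  inversion Hnd; subst. rewrite sumC_cons.
  destruct Hin as [<-|Hin].
  - destruct Hin' as [->|Hin']; [congruence|].
    rewrite (sumC_single L g p'); auto.
    intros q Hq Hq'. apply H; [right; auto| |auto]. intros ->; contradiction.
  - destruct Hin' as [<-|Hin'].
    + rewrite (sumC_single L g p); auto. ring.
      intros q Hq Hq'. apply H; [right; auto|auto|]. intros ->; contradiction.
    + rewrite H; [|left; auto|intros ->; contradiction|intros ->; contradiction].
      rewrite IH; auto. ring. intros q Hq ? ?; apply H; auto; right; auto.
Qed.

Fixpoint Qp (W : list R) (t : R) : R :=
  match W with [] => 1 | w :: W' => (t - w) * Qp W' t end.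

Lemma Qp_zero W t : In t W -> Qp W t = 0.
Proof.
  induction W as [|w W IH]; simpl; intros H; [destruct H|].
  destruct H as [->|H]; [ring|]. rewrite IH; auto; ring.
Qed.

Lemma Qp_nz W t : (forall w, In w W -> w <> t) -> Qp W t <> 0.
Proof.
  induction W as [|w W IH]; simpl; intros H; [lra|].
  apply Rmult_integral_contrapositive_currified.
  - assert (w <> t) by (apply H; auto). lra.
  - apply IH; intros; apply H; auto.
Qed.

Section Key.
Variable L : list (nat * nat).
Variable f : nat * nat -> R.
Variable x : nat -> nat * nat -> C.
Hypothesis Hyp : forall N, lim0 (fun n => sumC L (fun p => RtoC (f p ^ N) * x n p)%C).

Lemma class_step W : forall N,
  lim0 (fun n => sumC L (fun p => RtoC (Qp W (f p) * f p ^ N) * x n p)%C).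
Proof.
  induction W as [|w W IH]; intros N; simpl.
  - eapply lim0_ext; [|apply (Hyp N)]. intros n; apply sumC_ext; intros p _.
    now rewrite Rmult_1_l.
  - eapply lim0_ext; [|apply (lim0_minus _ _ (IH (S N)) (lim0_scal (RtoC w) _ (IH N)))].
    intros n. simpl. rewrite <- sumC_lin. idtac.
    apply sumC_ext; intros p _. rewrite !RtoC_mult, RtoC_minus. simpl. ring.
Qed.

Lemma class_lim v :
  lim0 (fun n => sumC L (fun p => if Req_dec_T (f p) v then x n p else RtoC 0)).
Proof.
  set (W := map f (filter (fun p => if Req_dec_T (f p) v then false else true) L)).
  assert (HQ : Qp W v <> 0).
  { apply Qp_nz. intros w Hw. unfold W in Hw. apply in_map_iff in Hw.
    destruct Hw as [p [<- Hp]]. apply filter_In in Hp. destruct Hp as [_ Hp].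
    destruct (Req_dec_T (f p) v); congruence. }
  eapply lim0_ext; [|apply (lim0_scal (RtoC (/ Qp W v)) _ (class_step W 0))].
  intros n. simpl. rewrite <- sumC_scal. apply sumC_ext. intros p Hp.
  destruct (Req_dec_T (f p) v) as [e|e].
  - rewrite e. rewrite Rmult_1_r. rewrite Cmult_assoc, <- RtoC_mult.
    rewrite Rinv_l by auto. ring.
  - rewrite (Qp_zero W (f p)). rewrite Rmult_0_l. ring.
    unfold W. apply in_map. apply filter_In. split; auto.
    destruct (Req_dec_T (f p) v); congruence.
Qed.
End Key.


Lemma NoDup_all_idx : NoDup all_idx.
Proof.
  unfold all_idx. repeat constructor; simpl; intuition discriminate.
Qed.

Lemma comb (f : nat*nat -> R) (z : nat*nat -> Prop) (Lim : nat -> list (nat*nat) -> Prop) :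
 (forall p, In p all_idx -> ~ z p -> exists p', In p' all_idx /\ p' <> p /\ ~ z p' /\ f p' = f p) ->
 (forall p p', p <> p' -> In p all_idx -> In p' all_idx -> ~ z p -> ~ z p' ->
    (forall p'', In p'' all_idx -> ~ z p'' -> p'' <> p -> p'' <> p' -> f p'' <> f p) ->
    f p' = f p -> forall N, Lim N [p; p']) ->
 let L := filter (fun p => if excluded_middle_informative (z p) then false else true) all_idx in
 (length L = 0 \/ length L = 2 \/ length L = 3 \/ length L = 4)%nat /\
 ((length L = 2 \/ length L = 3)%nat -> exists c, forall p, In p L -> f p = c) /\
 (length L = 4%nat -> (exists c, forall p, In p L -> f p = c) \/
    exists L1 L2 : list (nat*nat), Permutation (L1 ++ L2) L /\ length L1 = 2%nat /\ length L2 = 2%nat /\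
      (exists c, forall p, In p L1 -> f p = c) /\ (exists c, forall p, In p L2 -> f p = c) /\
      forall N, Lim N L1 /\ Lim N L2).
Proof.
  intros HP Hpair L.
  assert (inL : forall p, In p L <-> In p all_idx /\ ~ z p).
  { intros p. unfold L. rewrite filter_In.
    destruct (excluded_middle_informative (z p)); intuition discriminate. }
  assert (ndL : NoDup L) by (apply NoDup_filter, NoDup_all_idx).
  assert (len4 : (length L <= 4)%nat).
  { unfold L. apply (Nat.le_trans _ _ _ (filter_length_le _ _)). simpl; lia. }
  assert (partner : forall p, In p L -> exists p', In p' L /\ p' <> p /\ f p' = f p).
  { intros p Hp. apply inL in Hp. destruct Hp as [H1 H2].
    destruct (HP p H1 H2) as [p' [A [B [C D]]]]. exists p'. repeat split; auto.
    apply inL; auto. }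
  assert (ne1 : length L <> 1%nat).
  { intros H1. destruct L as [|x [|y L']] eqn:EL; simpl in H1; try lia.
    destruct (partner x (or_introl eq_refl)) as [p' [[<-|[]] [? _]]]. congruence. }
  assert (nonconst : (~ exists c, forall p, In p L -> f p = c) ->
     exists p1 p1' p2 p2', NoDup [p1;p1';p2;p2'] /\ incl [p1;p1';p2;p2'] L /\
        f p1' = f p1 /\ f p2' = f p2 /\ f p1 <> f p2).
  { intros Hnc.
    assert (Hex : exists p1 p2, In p1 L /\ In p2 L /\ f p1 <> f p2).
    { apply NNPP. intros Hno. apply Hnc. destruct L as [|x L'].
      - exists 0. intros p [].
      - exists (f x). intros p Hp. apply NNPP. intros Hne. apply Hno.
        exists p, x. repeat split; auto. left; auto. }
    destruct Hex as [p1 [p2 [Hp1 [Hp2 Hf]]]].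
    destruct (partner p1 Hp1) as [p1' [Hp1' [Hn1 Hf1]]].
    destruct (partner p2 Hp2) as [p2' [Hp2' [Hn2 Hf2]]].
    exists p1, p1', p2, p2'. repeat split; auto.
    - repeat constructor; simpl; intros H;
        repeat match goal with H : _ \/ _ |- _ => destruct H as [H|H] end;
        subst; try contradiction; try congruence.
    - intros p Hp; simpl in Hp;
        repeat match goal with H : _ \/ _ |- _ => destruct H as [H|H] end; subst; auto;
        contradiction. }
  assert (ge4 : (~ exists c, forall p, In p L -> f p = c) -> (4 <= length L)%nat).
  { intros Hnc. destruct (nonconst Hnc) as [p1 [p1' [p2 [p2' [A [B _]]]]]].
    apply (NoDup_incl_length A B). }
  split; [lia|split].
  - intros Hl. apply NNPP. intros Hnc. specialize (ge4 Hnc). lia.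
  - intros Hl. destruct (classic (exists c, forall p, In p L -> f p = c)) as [Hc|Hnc]; [left; auto|right].
    destruct (nonconst Hnc) as [p1 [p1' [p2 [p2' [A [B [C [D E]]]]]]]].
    assert (Hperm : Permutation [p1;p1';p2;p2'] L).
    { apply NoDup_Permutation_bis; auto; simpl; lia. }
    assert (HinL : forall p, In p all_idx -> ~ z p -> p = p1 \/ p = p1' \/ p = p2 \/ p = p2').
    { intros p H1 H2. assert (Hp : In p L) by (apply inL; auto).
      apply (Permutation_in _ (Permutation_sym Hperm)) in Hp. simpl in Hp. intuition. }
    assert (Hnd := A).
    inversion A as [|? ? nA A2]; subst. inversion A2 as [|? ? nA2 A3]; subst.
    inversion A3 as [|? ? nA3 A4]; subst.
    simpl in nA, nA2, nA3.
    assert (Hi : forall p, In p [p1;p1';p2;p2'] -> In p all_idx /\ ~ z p).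
    { intros p Hp. apply inL. apply B. auto. }
    destruct (Hi p1 ltac:(simpl; auto)) as [I1 Z1].
    destruct (Hi p1' ltac:(simpl; auto)) as [I1' Z1'].
    destruct (Hi p2 ltac:(simpl; auto)) as [I2 Z2].
    destruct (Hi p2' ltac:(simpl; auto)) as [I2' Z2'].
    exists [p1;p1'], [p2;p2']. split; [exact Hperm|]. split; [reflexivity|]. split; [reflexivity|].
    split; [|split; [|intros N; split]].
    + exists (f p1). intros p [<-|[<-|[]]]; auto.
    + exists (f p2). intros p [<-|[<-|[]]]; auto.
    + assert (n11 : p1 <> p1') by (intros Hx; apply nA; left; auto).
      apply Hpair; auto.
      intros p'' H1 H2 H3 H4. destruct (HinL p'' H1 H2) as [ -> | [ -> | [ -> | -> ]]]; try congruence.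
      all: try (intros Hx; apply E; congruence).
    + assert (n22 : p2 <> p2') by (intros Hx; apply nA3; left; auto).
      apply Hpair; auto.
      intros p'' H1 H2 H3 H4. destruct (HinL p'' H1 H2) as [ -> | [ -> | [ -> | -> ]]]; try congruence.
      all: try (intros Hx; apply E; congruence).
Qed.


Lemma perN (g : R -> R) : (forall t, g (t + 2*PI) = g t) -> forall n t, g (t + 2*PI*INR n) = g t.
Proof.
  intros H n; induction n as [|n IH]; intros t.
  - simpl. now rewrite Rmult_0_r, Rplus_0_r.
  - rewrite S_INR. replace (t + 2*PI*(INR n + 1)) with ((t + 2*PI*INR n) + 2*PI) by ring.
    rewrite H. apply IH.
Qed.

Lemma perZ (g : R -> R) : (forall t, g (t + 2*PI) = g t) -> forall t (k : Z), g (t + 2*PI*IZR k) = g t.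
Proof.
  intros H t k. destruct (Z_le_dec 0 k) as [Hk|Hk].
  - rewrite <- (Z2Nat.id k Hk). rewrite <- INR_IZR_INZ. apply perN; auto.
  - assert (Hk' : (0 <= - k)%Z) by lia. rewrite <- (Z.opp_involutive k).
    rewrite <- (Z2Nat.id (- k) Hk'). rewrite opp_IZR, <- INR_IZR_INZ.
    set (n := Z.to_nat (-k)).
    rewrite <- (perN g H n (t + 2 * PI * - INR n)). f_equal. ring.
Qed.

Ltac etafix :=
  repeat match goal with
  | |- context [Derive (fun x : R => ?f x)] => change (fun x : R => f x) with f
  end.

Section Analytic.
Variable q : R.
Variable rho : R -> R.
Hypothesis Hq : 1 < q.
Hypothesis Hpos : forall t, 0 < rho t.
Hypothesis Hper : forall t, rho (t + 2 * PI) = rho t.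
Hypothesis Hd1 : forall t, ex_derive rho t.
Hypothesis Hd2 : forall t, ex_derive (Derive rho) t.

Lemma sq_gt1 : 1 < sqrt q.
Proof. rewrite <- sqrt_1. apply sqrt_lt_1; lra. Qed.

Lemma sq_sq : sqrt q * sqrt q = q.
Proof. apply sqrt_sqrt; lra. Qed.

Lemma dln t : Derive (fun s => ln (rho s)) t = Derive rho t / rho t.
Proof.
  apply is_derive_unique. specialize (Hpos t). specialize (Hd1 t).
  auto_derive; auto. change (fun x : R => rho x) with rho. field. lra.
Qed.

Lemma ddln t : Derive (Derive (fun s => ln (rho s))) t =
  (Derive (Derive rho) t * rho t - Derive rho t ^ 2) / rho t ^ 2.
Proof.
  rewrite (Derive_ext _ (fun s => Derive rho s / rho s)) by apply dln.
  apply is_derive_unique. specialize (Hpos t). specialize (Hd1 t). specialize (Hd2 t).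
  auto_derive; [repeat split; auto; lra|]. etafix. field. lra.
Qed.

Lemma dy1 t : Derive (y1 rho) t = Derive rho t * cos t - rho t * sin t.
Proof. apply is_derive_unique. unfold y1. specialize (Hd1 t). auto_derive; auto. etafix. ring. Qed.
Lemma dy2 t : Derive (y2 rho) t = Derive rho t * sin t + rho t * cos t.
Proof. apply is_derive_unique. unfold y2. specialize (Hd1 t). auto_derive; auto. etafix. ring. Qed.
Lemma ddy1 t : Derive (Derive (y1 rho)) t =
  Derive (Derive rho) t * cos t - 2 * Derive rho t * sin t - rho t * cos t.
Proof.
  rewrite (Derive_ext _ _ t dy1). apply is_derive_unique.
  specialize (Hd1 t). specialize (Hd2 t). auto_derive; auto. etafix. ring.
Qed.
Lemma ddy2 t : Derive (Derive (y2 rho)) t =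
  Derive (Derive rho) t * sin t + 2 * Derive rho t * cos t - rho t * sin t.
Proof.
  rewrite (Derive_ext _ _ t dy2). apply is_derive_unique.
  specialize (Hd1 t). specialize (Hd2 t). auto_derive; auto. etafix. ring.
Qed.

Lemma dper t : Derive rho (t + 2 * PI) = Derive rho t.
Proof.
  symmetry. rewrite (Derive_ext rho (fun s => rho (s + 2 * PI))) by (intros; now rewrite Hper).
  rewrite Derive_comp; auto.
  - replace (Derive (fun x => x + 2 * PI) t) with 1. ring. symmetry; apply is_derive_unique; auto_derive; auto; ring.
  - auto_derive; auto.
Qed.

Lemma thq_bounds : 0 < theta_q q < PI /\ cos (theta_q q) = 1 / sqrt q /\ 0 < sin (theta_q q).
Proof.
  pose proof sq_gt1.
  assert (H1 : 0 < 1 / sqrt q < 1).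
  { split. apply Rdiv_lt_0_compat; lra. apply (Rmult_lt_reg_r (sqrt q)); [lra|].
    field_simplify; lra. }
  unfold theta_q. assert (Hb := acos_bound_lt (1 / sqrt q) ltac:(lra)).
  split; auto. split. apply cos_acos; lra. apply sin_gt_0; lra.
Qed.

Lemma Dpos z : theta_q q - PI < z < PI - theta_q q -> 0 < sqrt q * cos z + 1.
Proof.
  intros Hz. destruct thq_bounds as [Hb [Hc Hs]]. pose proof sq_gt1.
  assert (Hcz : cos (PI - theta_q q) < cos z).
  { destruct (Rle_dec 0 z).
    - apply cos_decreasing_1; lra.
    - rewrite <- (cos_neg z). apply cos_decreasing_1; lra. }
  rewrite cos_minus, cos_PI, sin_PI, Hc in Hcz.
  assert (-1 < sqrt q * cos z); [|lra].
  replace (-1) with (sqrt q * (-1 * (1 / sqrt q) + 0 * sin (theta_q q))) by (field; lra).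
  apply Rmult_lt_compat_l; lra.
Qed.

Lemma Dneg z : PI - theta_q q < z < PI + theta_q q -> sqrt q * cos z + 1 < 0.
Proof.
  intros Hz. destruct thq_bounds as [Hb [Hc Hs]]. pose proof sq_gt1.
  set (w := z - PI).
  assert (Hcz : cos (theta_q q) < cos w).
  { destruct (Rle_dec 0 w).
    - apply cos_decreasing_1; unfold w in *; lra.
    - rewrite <- (cos_neg w). apply cos_decreasing_1; unfold w in *; lra. }
  replace z with (w + PI) by (unfold w; ring). rewrite neg_cos.
  rewrite Hc in Hcz.
  assert (1 < sqrt q * cos w); [|lra].
  replace 1 with (sqrt q * (1 / sqrt q)) at 1 by (field; lra).
  apply Rmult_lt_compat_l; lra.
Qed.


Lemma cos_per t : cos (t + 2 * PI) = cos t.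
Proof. rewrite cos_plus, cos_2PI, sin_2PI. ring. Qed.
Lemma sin_per t : sin (t + 2 * PI) = sin t.
Proof. rewrite sin_plus, cos_2PI, sin_2PI. ring. Qed.

Lemma hfun_perZ z k : hfun q (z + 2 * PI * IZR k) = hfun q z.
Proof. unfold hfun. rewrite (perZ cos cos_per), (perZ sin sin_per). reflexivity. Qed.

Lemma F_perZ t k : Derive rho (t + 2 * PI * IZR k) / rho (t + 2 * PI * IZR k) = Derive rho t / rho t.
Proof. rewrite (perZ rho Hper), (perZ (Derive rho) dper). reflexivity. Qed.

Lemma reduce al z : exists th, 0 <= th < 2 * PI /\
  Derive (fun s => ln (rho s)) th = Derive rho (al + z) / rho (al + z) /\
  hfun q (th - al) = hfun q z /\
  (forall lo hi, lo < z < hi -> in_mod2pi (th - al) lo hi).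
Proof.
  set (m := Int_part ((al + z) / (2 * PI))).
  exists (al + z + 2 * PI * IZR (- m)).
  destruct (base_Int_part ((al + z) / (2 * PI))) as [B1 B2]. fold m in B1, B2.
  pose proof PI_RGT_0 as HPI.
  split; [|split; [|split]].
  - rewrite opp_IZR.
    assert (E : al + z = 2 * PI * ((al + z) / (2 * PI))) by (field; lra).
    split.
    + assert (0 <= 2 * PI * ((al + z) / (2 * PI) - IZR m)) by (apply Rmult_le_pos; lra). nra.
    + assert (2 * PI * ((al + z) / (2 * PI) - IZR m) < 2 * PI * 1) by (apply Rmult_lt_compat_l; lra). nra.
  - rewrite dln. apply F_perZ.
  - replace (al + z + 2 * PI * IZR (- m) - al) with (z + 2 * PI * IZR (- m)) by ring.
    apply hfun_perZ.
  - intros lo hi H. exists m.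
    replace (al + z + 2 * PI * IZR (- m) - al + 2 * PI * IZR m) with z by (rewrite opp_IZR; ring).
    auto.
Qed.

Lemma exists_T j l a : (j = 1 \/ j = 2)%nat -> exists th, Tspec q rho j l a th.
Proof.
  intros Hj. set (al := theta_eta_l a l).
  pose proof sq_gt1 as Hs. destruct thq_bounds as [Hb [Hc Hsn]].
  set (G := fun u => (sqrt q * cos u + 1) * (Derive rho (al + u) / rho (al + u)) - sqrt q * sin u).
  assert (HG : continuity G).
  { intros x. apply continuity_pt_filterlim. apply (@ex_derive_continuous R_AbsRing R_NormedModule G x).
    unfold G. specialize (Hd1 (al + x)). specialize (Hd2 (al + x)). specialize (Hpos (al + x)).
    auto_derive. repeat split; auto; lra. }
  assert (HmG : continuity (fun u => - G u)).
  { intros x. apply continuity_pt_filterlim. apply (@ex_derive_continuous R_AbsRing R_NormedModule (fun u => - G u) x).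
    unfold G. specialize (Hd1 (al + x)). specialize (Hd2 (al + x)). specialize (Hpos (al + x)).
    auto_derive. repeat split; auto; lra. }
  assert (Hsol : forall z, sqrt q * cos z + 1 <> 0 -> G z = 0 ->
            Derive rho (al + z) / rho (al + z) = hfun q z).
  { intros z Hz HGz. unfold G in HGz. unfold hfun.
    assert (E : (sqrt q * cos z + 1) * (Derive rho (al + z) / rho (al + z)) = sqrt q * sin z) by lra.
    rewrite <- E. field. split; auto. specialize (Hpos (al + z)); lra. }
  set (sth := sin (theta_q q)) in *.
  destruct Hj as [-> | ->].
  - set (lo := theta_q q - PI). set (hi := PI - theta_q q).
    assert (Glo : G lo = sqrt q * sth).
    { unfold G, lo. rewrite cos_minus, sin_minus, cos_PI, sin_PI, Hc. fold sth.
      match goal with |- ?A * _ - _ = _ => replace A with 0 by (field; lra) end; ring. }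
    assert (Ghi : G hi = - sqrt q * sth).
    { unfold G, hi. rewrite cos_minus, sin_minus, cos_PI, sin_PI, Hc. fold sth.
      match goal with |- ?A * _ - _ = _ => replace A with 0 by (field; lra) end; ring. }
    assert (Hp : 0 < sqrt q * sth) by (apply Rmult_lt_0_compat; lra).
    destruct (IVT (fun u => - G u) lo hi HmG ltac:(unfold lo, hi; lra) ltac:(lra) ltac:(lra))
      as [z [Hz HGz]].
    assert (Hz' : lo < z < hi).
    { split; apply Rnot_le_lt; intros Hle.
      - assert (z = lo) by lra. subst z. lra.
      - assert (z = hi) by lra. subst z. lra. }
    assert (HD := Dpos z Hz').
    destruct (reduce al z) as [th [B [E1 [E2 E3]]]].
    exists th. unfold Tspec. simpl Nat.eqb. cbv iota. fold al.
    split; auto. split.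
    + rewrite E1, E2. apply Hsol; lra.
    + apply E3; auto.
  - set (lo := PI - theta_q q). set (hi := PI + theta_q q).
    assert (Glo : G lo = - sqrt q * sth).
    { unfold G, lo. rewrite cos_minus, sin_minus, cos_PI, sin_PI, Hc. fold sth.
      match goal with |- ?A * _ - _ = _ => replace A with 0 by (field; lra) end; ring. }
    assert (Ghi : G hi = sqrt q * sth).
    { unfold G, hi. rewrite cos_plus, sin_plus, cos_PI, sin_PI, Hc. fold sth.
      match goal with |- ?A * _ - _ = _ => replace A with 0 by (field; lra) end; ring. }
    assert (Hp : 0 < sqrt q * sth) by (apply Rmult_lt_0_compat; lra).
    destruct (IVT G lo hi HG ltac:(unfold lo, hi; lra) ltac:(lra) ltac:(lra))
      as [z [Hz HGz]].
    assert (Hz' : lo < z < hi).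
    { split; apply Rnot_le_lt; intros Hle.
      - assert (z = lo) by lra. subst z. lra.
      - assert (z = hi) by lra. subst z. lra. }
    assert (HD := Dneg z Hz').
    destruct (reduce al z) as [th [B [E1 [E2 E3]]]].
    exists th. unfold Tspec. simpl Nat.eqb. cbv iota. fold al.
    split; auto. split.
    + rewrite E1, E2. apply Hsol; lra.
    + apply E3; auto.
Qed.

Lemma alg_main a T thx u sg : (sg = 1 \/ sg = -1) ->
  cos a = sg * (cos T * cos u + sin T * sin u) ->
  sin a = sg * (sin T * cos u - cos T * sin u) ->
  cos thx = sg * cos T -> sin thx = sg * sin T ->
  Derive rho T * (sqrt q * cos u + 1) = rho T * sqrt q * sin u ->
  Psi_eta q rho a T thx * (sqrt q * cos u + 1) = sg * rho T * (sqrt q * sqrt q - 1) /\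
  detD2psi q rho a T thx * (sqrt q * cos u + 1) =
    rho T ^ 2 * (sqrt q * (sqrt q + cos u)
      - Derive (Derive (fun s => ln (rho s))) T * (sqrt q * cos u + 1) ^ 2).
Proof.
  intros Hsg Hca Hsa Hcx Hsx Hr1.
  assert (HL : Derive (Derive (fun s => ln (rho s))) T * rho T ^ 2 =
     Derive (Derive rho) T * rho T - Derive rho T ^ 2).
  { rewrite ddln. field. specialize (Hpos T). lra. }
  unfold Psi_eta, detD2psi. rewrite !dy1, !dy2, !ddy1, !ddy2. unfold y1, y2.
  rewrite Hca, Hsa, Hcx, Hsx.
  set (L2 := Derive (Derive (fun s => ln (rho s))) T) in *.
  set (r := rho T) in *. set (r1 := Derive rho T) in *. set (r2 := Derive (Derive rho) T) in *.
  set (c := cos T). set (s := sin T). set (cu := cos u) in *. set (su := sin u) in *.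
  set (sq := sqrt q) in *.
  assert (h4 : c * c + s * s - 1 = 0).
  { unfold c, s. rewrite <- (sin2_cos2 T). unfold Rsqr. ring. }
  assert (h3 : cu * cu + su * su - 1 = 0).
  { unfold cu, su. rewrite <- (sin2_cos2 u). unfold Rsqr. ring. }
  assert (h2 : r1 * (sq * cu + 1) - r * sq * su = 0) by lra.
  assert (h1 : r * r2 - r1 * r1 - L2 * r * r = 0) by lra.
  clearbody L2 r r1 r2 c s cu su sq.
  destruct Hsg as [-> | ->]; split;
  match goal with |- ?X = ?Y =>
    let E := fresh in
    first
    [ assert (E : X - Y = (c*c+s*s+1) * (c*c+s*s-1) * (- r * (sq*cu+1) * r2 + r*r*(sq*cu+1) + 2*sq*su*r*r1 - r*r) * (sq*cu+1)
          - (sq*cu+1)*(sq*cu+1) * (r * r2 - r1 * r1 - L2 * r * r)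
          - (r1 * (sq * cu + 1) - r * sq * su) * (r1 * (sq * cu + 1) - r * sq * su)
          + r*r*sq*sq*(cu * cu + su * su - 1)) by ring
    | assert (E : X - Y = (c*c+s*s-1) * (r*(sq*cu-1) + sq*su*r1) * (sq*cu+1)
          + sq*su*(r1 * (sq * cu + 1) - r * sq * su) + r*sq*sq*(cu * cu + su * su - 1)) by ring
    | assert (E : X - Y = - ((c*c+s*s-1) * (r*(sq*cu-1) + sq*su*r1) * (sq*cu+1)
          + sq*su*(r1 * (sq * cu + 1) - r * sq * su) + r*sq*sq*(cu * cu + su * su - 1))) by ring ];
    rewrite ?h1, ?h2, ?h3, ?h4 in E; lra
  end.
Qed.

Lemma coef_nz j l a : (j = 1 \/ j = 2)%nat -> (l = 1 \/ l = 2)%nat ->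
  (forall t, Derive (Derive (fun s => ln (rho s))) t < sqrt q / (1 + sqrt q)) ->
  Psi_eta q rho a (thT q rho j l a) (thX q rho j l a) <> 0 /\
  detD2psi q rho a (thT q rho j l a) (thX q rho j l a) <> 0.
Proof.
  intros Hj Hl HL2.
  pose proof (epsilon_spec (inhabits 0) (Tspec q rho j l a) (exists_T j l a Hj)) as HT.
  unfold thT, thX, Tjl. set (T := epsilon (inhabits 0) (Tspec q rho j l a)) in *.
  destruct HT as [_ [HF Hr]].
  set (u := T - theta_eta_l a l) in *.
  pose proof sq_gt1 as Hs. pose proof (Hpos T) as HrT.
  assert (HD : sqrt q * cos u + 1 <> 0).
  { destruct Hj as [-> | ->]; simpl in Hr; destruct Hr as [k Hk];
      rewrite <- (perZ cos cos_per u k).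
    - pose proof (Dpos _ Hk); lra.
    - pose proof (Dneg _ Hk); lra. }
  assert (Hr1 : Derive rho T * (sqrt q * cos u + 1) = rho T * sqrt q * sin u).
  { rewrite dln in HF. unfold hfun in HF.
    replace (Derive rho T) with (rho T * (Derive rho T / rho T)) by (field; lra).
    rewrite HF. field. auto. }
  set (thx := T + kdelta2 l * PI).
  assert (Hal : exists sg, (sg = 1 \/ sg = -1) /\
     cos a = sg * (cos T * cos u + sin T * sin u) /\
     sin a = sg * (sin T * cos u - cos T * sin u) /\
     cos thx = sg * cos T /\ sin thx = sg * sin T).
  { destruct Hl as [-> | ->].
    - exists 1. assert (Ha : a = T - u) by (unfold u, theta_eta_l; simpl; ring).
      assert (Hx : thx = T) by (unfold thx, kdelta2; simpl; ring).
      rewrite Hx, Ha, cos_minus, sin_minus. repeat split; try ring. left; auto.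
    - exists (-1). assert (Ha : a = (T - u) - PI) by (unfold u, theta_eta_l; simpl; ring).
      assert (Hx : thx = T + PI) by (unfold thx, kdelta2; simpl; ring).
      rewrite Hx, Ha, (cos_minus (T - u) PI), (sin_minus (T - u) PI), cos_PI, sin_PI, neg_cos, neg_sin,
        cos_minus, sin_minus.
      repeat split; try ring. right; auto. }
  destruct Hal as [sg [Hsg [Hca [Hsa [Hcx Hsx]]]]].
  destruct (alg_main a T thx u sg Hsg Hca Hsa Hcx Hsx Hr1) as [EP ED].
  set (D := sqrt q * cos u + 1) in *.
  split.
  - intros H0. rewrite H0, Rmult_0_l in EP.
    assert (P : 0 < rho T * (sqrt q * sqrt q - 1)) by (apply Rmult_lt_0_compat; nra).
    destruct Hsg as [-> | ->]; nra.
  - intros H0. rewrite H0, Rmult_0_l in ED.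
    set (L2 := Derive (Derive (fun s => ln (rho s))) T) in *.
    specialize (HL2 T). fold L2 in HL2.
    set (cu := cos u) in *. set (sq := sqrt q) in *.
    assert (Hcu : -1 <= cu <= 1) by (unfold cu; apply COS_bound).
    assert (HD2 : 0 < D ^ 2) by (apply pow2_gt_0; auto).
    assert (HK1 : D ^ 2 <= (1 + sq) * (sq + cu)).
    { assert (E : (1 + sq) * (sq + cu) - D ^ 2 = sq * sq * (1 - cu * cu) + (sq - 1) * (1 - cu))
        by (unfold D; ring).
      assert (0 <= sq * sq * (1 - cu * cu)) by (apply Rmult_le_pos; nra).
      assert (0 <= (sq - 1) * (1 - cu)) by (apply Rmult_le_pos; lra). lra. }
    assert (HK2 : L2 * D ^ 2 < sq / (1 + sq) * D ^ 2) by (apply Rmult_lt_compat_r; auto).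
    assert (HK3 : sq / (1 + sq) * D ^ 2 <= sq * (sq + cu)).
    { replace (sq * (sq + cu)) with (sq / (1 + sq) * ((1 + sq) * (sq + cu))) by (field; lra).
      apply Rmult_le_compat_l; auto. apply Rlt_le, Rdiv_lt_0_compat; lra. }
    assert (HK : 0 < sq * (sq + cu) - L2 * D ^ 2) by lra.
    assert (0 < rho T ^ 2) by (apply pow2_gt_0; lra).
    assert (0 < rho T ^ 2 * (sq * (sq + cu) - L2 * D ^ 2)) by (apply Rmult_lt_0_compat; auto).
    lra.
Qed.

End Analytic.

Definition Xt (q : R) (rho : R -> R) (phi : R -> C) (k : R) (a : R) (p : nat * nat) : C :=
  let '(j, l) := p in
  let th := thT q rho j l a in
  let thx := thX q rho j l a in
  Cmult (Cmult (RtoC (Psi_eta q rho a th thx / sqrt (Rabs (detD2psi q rho a th thx))))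
               (phi_at q rho phi a p))
        (cexpi (PI * (-1) ^ l * (1 - (-1) ^ j) / 4 + k * psi_eta q rho a th thx)).

Lemma term_eq q rho phi K N a p :
  term q rho phi K N a p = (RtoC (f_eta q rho a p ^ N) * Xt q rho phi K a p)%C.
Proof.
  destruct p as [j l]. unfold term, Xt. cbv zeta.
  unfold Rdiv. rewrite !RtoC_mult. ring.
Qed.

Lemma Xzero q rho phi K a p : phi_at q rho phi a p = RtoC 0 -> Xt q rho phi K a p = RtoC 0.
Proof.
  destruct p as [j l]. intros H. unfold Xt. cbv zeta. rewrite H. ring.
Qed.

Lemma Cmod_cexpi t : Cmod (cexpi t) = 1.
Proof.
  unfold Cmod, cexpi. cbn [fst snd].
  replace (cos t ^ 2 + sin t ^ 2) with 1. apply sqrt_1.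
  rewrite <- (sin2_cos2 t). unfold Rsqr. ring.
Qed.

Lemma idx_cases j l : In (j, l) all_idx -> (j = 1 \/ j = 2)%nat /\ (l = 1 \/ l = 2)%nat.
Proof.
  intros H; simpl in H; destruct H as [H|[H|[H|[H|[]]]]]; inversion H; auto.
Qed.

Theorem lemma7 (q : R) (rho : R -> R) (phi : R -> C) (k : nat -> R) :
  1 < q ->
  (forall t, 0 < rho t) ->
  (forall t, rho (t + 2 * PI) = rho t) ->
  (forall t, ex_derive rho t) ->
  (forall t, ex_derive (Derive rho) t) ->
  (forall t, continuous (Derive (Derive rho)) t) ->
  (forall t, Derive (Derive (fun s => ln (rho s))) t < sqrt q / (1 + sqrt q)) ->
  (forall t, phi (t + 2 * PI) = phi t) ->
  (forall t, continuous phi t) ->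
  (forall n, 0 < k n) ->
  is_lim_seq k p_infty ->
  (forall (a : R) (N : nat),
     is_lim_seq (fun n => Cmod (sumC all_idx (term q rho phi (k n) N a))) 0) ->
  forall a : R,
    let L := Lambda q rho phi a in
    (length L = 0 \/ length L = 2 \/ length L = 3 \/ length L = 4)%nat /\
    ((length L = 2 \/ length L = 3)%nat -> f_const_on q rho a L) /\
    (length L = 4%nat ->
       f_const_on q rho a L \/
       exists L1 L2 : list (nat * nat),
         Permutation (L1 ++ L2) L /\
         length L1 = 2%nat /\ length L2 = 2%nat /\
         f_const_on q rho a L1 /\ f_const_on q rho a L2 /\
         forall N : nat,
           is_lim_seq (fun n => Cmod (sumC L1 (term q rho phi (k n) N a))) 0 /\
           is_lim_seq (fun n => Cmod (sumC L2 (term q rho phi (k n) N a))) 0).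
Proof.
  intros Hq Hpos Hper Hd1 Hd2 Hcont HL2 Hphiper Hphicont Hk Hkinf Hlim a.
  set (f := f_eta q rho a).
  set (X := fun n p => Xt q rho phi (k n) a p).
  assert (Hyp : forall N, lim0 (fun n => sumC all_idx (fun p => RtoC (f p ^ N) * X n p)%C)).
  { intros N. eapply lim0_ext; [|apply (Hlim a N)]. intros n. apply sumC_ext.
    intros p _. apply term_eq. }
  assert (Xmod : forall p, In p all_idx -> exists K, 0 < K /\
            forall n, Cmod (X n p) = K * Cmod (phi_at q rho phi a p)).
  { intros [j l] Hin. destruct (idx_cases j l Hin) as [Hj Hl].
    destruct (coef_nz q rho Hq Hpos Hper Hd1 Hd2 j l a Hj Hl HL2) as [HP HD].
    exists (Rabs (Psi_eta q rho a (thT q rho j l a) (thX q rho j l a) /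
                 sqrt (Rabs (detD2psi q rho a (thT q rho j l a) (thX q rho j l a))))).
    split.
    - apply Rabs_pos_lt. unfold Rdiv. apply Rmult_integral_contrapositive_currified; auto.
      apply Rinv_neq_0_compat. apply Rgt_not_eq. apply sqrt_lt_R0. apply Rabs_pos_lt; auto.
    - intros n. unfold X, Xt. cbv zeta. rewrite !Cmod_mult, Cmod_R, Cmod_cexpi. ring. }
  assert (Hpartner : forall p, In p all_idx -> ~ phi_at q rho phi a p = RtoC 0 ->
     exists p', In p' all_idx /\ p' <> p /\ ~ phi_at q rho phi a p' = RtoC 0 /\ f p' = f p).
  { intros p Hin Hnz. apply NNPP. intros Hno.
    pose proof (class_lim all_idx f X Hyp (f p)) as Hc.
    assert (Hc' : lim0 (fun n => X n p)).
    { eapply lim0_ext; [|exact Hc]. intros n. simpl.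
      rewrite (sumC_single _ _ p NoDup_all_idx Hin).
      - destruct (Req_dec_T (f p) (f p)); [reflexivity|congruence].
      - intros p' Hp' Hne. destruct (Req_dec_T (f p') (f p)) as [e|e]; [|reflexivity].
        destruct (classic (phi_at q rho phi a p' = RtoC 0)) as [Hz|Hz].
        + apply Xzero; auto.
        + exfalso. apply Hno. exists p'. auto. }
    destruct (Xmod p Hin) as [K [HK HX]].
    unfold lim0 in Hc'.
    pose proof (is_lim_seq_ext _ (fun _ => K * Cmod (phi_at q rho phi a p)) 0 HX Hc') as Hc2.
    apply is_lim_seq_unique in Hc2. rename Hc2 into Hc'0. clear Hc'. rename Hc'0 into Hc'. rewrite Lim_seq_const in Hc'.
    injection Hc' as Hc'.
    assert (Cmod (phi_at q rho phi a p) <> 0).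
    { intros H0. apply Hnz. apply Cmod_eq_0. auto. }
    assert (0 < Cmod (phi_at q rho phi a p)) by (pose proof (Cmod_ge_0 (phi_at q rho phi a p)); lra).
    nra. }
  assert (Hpair : forall p p', p <> p' -> In p all_idx -> In p' all_idx ->
     ~ phi_at q rho phi a p = RtoC 0 -> ~ phi_at q rho phi a p' = RtoC 0 ->
     (forall p'', In p'' all_idx -> ~ phi_at q rho phi a p'' = RtoC 0 -> p'' <> p -> p'' <> p' -> f p'' <> f p) ->
     f p' = f p -> forall N,
     is_lim_seq (fun n => Cmod (sumC [p; p'] (term q rho phi (k n) N a))) 0).
  { intros p p' Hne Hin Hin' Hz Hz' Hoth Hf N.
    pose proof (class_lim all_idx f X Hyp (f p)) as Hc.
    apply (lim0_scal (RtoC (f p ^ N))) in Hc.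
    change (lim0 (fun n => sumC [p; p'] (term q rho phi (k n) N a))).
    eapply lim0_ext; [|exact Hc]. intros n. simpl.
    rewrite (sumC_pair _ _ p p' NoDup_all_idx Hin Hin' Hne).
    - rewrite !sumC_cons. unfold sumC at 1. simpl fold_right.
      rewrite !term_eq. fold f. rewrite Hf.
      destruct (Req_dec_T (f p) (f p)); [|congruence].
      destruct (Req_dec_T (f p') (f p)); [|congruence].
      unfold X. ring.
    - intros p'' Hp'' H1 H2. destruct (Req_dec_T (f p'') (f p)) as [e|e]; [|reflexivity].
      destruct (classic (phi_at q rho phi a p'' = RtoC 0)) as [Hz0|Hz0].
      + apply Xzero; auto.
      + exfalso. apply (Hoth p''); auto. }
  exact (comb f (fun p => phi_at q rho phi a p = RtoC 0)
           (fun N L => is_lim_seq (fun n => Cmod (sumC L (term q rho phi (k n) N a))) 0)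
           Hpartner Hpair).
Qed.
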